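(* Let $\alpha\in\mathbb{R}\setminus\{0\}$, $\vartheta\in(0,\pi)$, and let $k>0$ with $k\notin\mathbb{N}$. Put $g(k)=\cos k\pi+\frac{\alpha}{4k}\sin k\pi$ and assume $|g(k)|\ge1$. Define $$f(k)=-\cos k\pi+\frac{\sin^2 k\pi}{\frac{\alpha}{4k}\sin k\pi\pm\sqrt{g(k)^2-1}},$$ where the sign $\pm$ is the sign of $g(k)$. Then: (a) The equation $\cos k\vartheta=f(k)$ (the eigenvalue condition for $H^+$) holds if and only if $$\frac{\alpha}{2k}(1+\cos k\vartheta\cos k\pi)(\cos k\vartheta+\cos k\pi)=\sin k\pi\,(1+2\cos k\vartheta\cos k\pi+\cos^2 k\vartheta).$$ (b) The equation $-\cos k\vartheta=f(k)$ (the eigenvalue condition for $H^-$) holds if and only if $$\frac{\alpha}{2k}(1-\cos k\vartheta\cos k\pi)(-\cos k\vartheta+\cos k\pi)=\sin k\pi\,(1-2\cos k\vartheta\cos k\pi+\cos^2 k\vartheta).$$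
   Context: For non-integer $k>0$ with $|g(k)|\ge1$, the number $k^2$ is an eigenvalue of the even (resp. odd) part $H^+$ (resp. $H^-$) of the bent chain Hamiltonian if and only if $\cos k\vartheta=f(k)$ (resp. $-\cos k\vartheta=f(k)$). Here the bent chain is a chain of rings of circumference $2\pi$ coupled by $\delta$-couplings of strength $\alpha$ at the touching points, with one ring split into arcs of lengths $\pi\pm\vartheta$. The claim is a purely analytic equivalence of the two displayed equations. *)

(* Defs.v *)
From Stdlib Require Import Reals.
Open Scope R_scope.

Definition gfun (alpha k : R) : R :=
  cos (k * PI) + alpha / (4 * k) * sin (k * PI).

(* sign of g(k): +1 if g(k) >= 0, -1 otherwise (under |g(k)| >= 1 this is the
   sign of g(k), which is never 0) *)
Definition sgn_g (alpha k : R) : R :=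
  if Rle_dec 0 (gfun alpha k) then 1 else -1.

Definition ffun (alpha k : R) : R :=
  - cos (k * PI)
  + (sin (k * PI)) ^ 2
    / (alpha / (4 * k) * sin (k * PI)
       + sgn_g alpha k * sqrt ((gfun alpha k) ^ 2 - 1)).

(* Main.v *)
Require Import Defs.
From Stdlib Require Import Reals Lra Psatz ZArith Lia.
Open Scope R_scope.

Lemma key (a c s t x : R) :
  s <> 0 -> c^2 + s^2 = 1 -> t^2 = (c + a*s)^2 - 1 -> 0 <= (c + a*s) * t ->
  x^2 <= 1 ->
  (x = - c + s^2 / (a*s + t) <->
   2*a*(1 + x*c)*(x + c) = s*(1 + 2*x*c + x^2)).
Proof.
  intros Hs Hcs Ht Hgt Hx.
  set (g := c + a*s) in *.
  assert (HD : a*s + t <> 0).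
  { intro HD0. assert (Ht' : t = - (a*s)) by lra.
    subst t. assert (Hsq : s * (s - 2*a*c) = 0).
    { unfold g in Ht. nra. }
    assert (Hs2 : s = 2*a*c).
    { destruct (Rmult_integral _ _ Hsq); [contradiction|lra]. }
    unfold g in Hgt. rewrite Hs2 in Hgt.
    assert (Hac: a*c = 0) by nra.
    apply Hs. rewrite Hs2. nra. }
  set (u := x + c).
  set (E := 2*a*(1 + x*c)*(x + c) - s*(1 + 2*x*c + x^2)).
  assert (Hid : (t*u)^2 - (s^2 - a*s*u)^2 = s*E + (c^2+s^2-1)*(u^2 + 2*a*s*u - s^2)).
  { replace ((t*u)^2) with (t^2*u^2) by ring. rewrite Ht. unfold E, u, g. ring. }
  rewrite Hcs in Hid. replace (1-1) with 0 in Hid by ring.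
  split.
  - intro Hxe.
    assert (HuD : u * (a*s+t) = s^2).
    { unfold u. rewrite Hxe. field. exact HD. }
    assert (HAB : t*u = s^2 - a*s*u) by lra.
    rewrite HAB in Hid.
    assert (s * E = 0) by lra.
    destruct (Rmult_integral _ _ H) as [H1|H1]; [contradiction|]. unfold E, u in *; lra.
  - intro HE. assert (HE0 : E = 0) by (unfold E, u in *; lra).
    rewrite HE0 in Hid.
    assert (Hprod : (t*u - (s^2 - a*s*u)) * (t*u + (s^2 - a*s*u)) = 0) by nra.
    assert (Hgood : t*u - (s^2 - a*s*u) = 0 -> x = - c + s^2 / (a*s + t)).
    { intro H0. assert (u*(a*s+t) = s^2) by lra.
      apply (Rmult_eq_reg_r (a*s+t)); [|exact HD].
      unfold u in H. field_simplify; [|exact HD]. lra. }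
    destruct (Rmult_integral _ _ Hprod) as [H0|H0]; [now apply Hgood|].
    destruct (Req_dec t 0) as [Ht0|Ht0].
    { apply Hgood. rewrite Ht0 in *. lra. }
    exfalso.
    set (mu := g - t).
    assert (Hum : u * (mu - c) = s^2) by (unfold mu, g; lra).
    assert (Hxm : x * (mu - c) = 1 - c*mu) by (unfold u in Hum; nra).
    assert (Hiden : (x^2 - 1) * (mu - c)^2 = s^2 * (1 - mu^2)).
    { replace ((x^2-1)*(mu-c)^2) with ((x*(mu-c))^2 - (mu-c)^2) by ring.
      rewrite Hxm. replace (s^2) with (1 - c^2) by lra. ring. }
    assert (Ht2 : 0 < t^2) by (rewrite <- Rsqr_pow2; apply Rsqr_pos_lt; exact Ht0).
    assert (Hg1 : 0 <= g^2 - 1) by lra.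
    assert (Hgt2 : (g^2-1)^2 < (g*t)^2).
    { replace ((g*t)^2) with (g^2 * t^2) by ring. rewrite Ht. nra. }
    assert (Hgt3 : g^2 - 1 < g*t) by nra.
    assert (Hmu : mu^2 < 1).
    { unfold mu. replace ((g-t)^2) with (g^2 - 2*g*t + t^2) by ring. lra. }
    assert (Hs2p : 0 < s^2) by (rewrite <- Rsqr_pow2; apply Rsqr_pos_lt; exact Hs).
    assert (0 <= (1 - x^2) * (mu - c)^2) by (apply Rmult_le_pos; [lra| apply pow2_ge_0]).
    assert (0 < s^2 * (1 - mu^2)) by (apply Rmult_lt_0_compat; lra).
    lra.
Qed.

Theorem proposition4p1 (alpha theta k : R) :
  alpha <> 0 ->
  0 < theta < PI ->
  0 < k ->
  (forall n : nat, k <> INR n) ->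
  1 <= Rabs (gfun alpha k) ->
  (cos (k * theta) = ffun alpha k <->
     alpha / (2 * k) * (1 + cos (k * theta) * cos (k * PI))
       * (cos (k * theta) + cos (k * PI))
     = sin (k * PI) * (1 + 2 * cos (k * theta) * cos (k * PI)
                       + cos (k * theta) ^ 2))
  /\
  (- cos (k * theta) = ffun alpha k <->
     alpha / (2 * k) * (1 - cos (k * theta) * cos (k * PI))
       * (- cos (k * theta) + cos (k * PI))
     = sin (k * PI) * (1 - 2 * cos (k * theta) * cos (k * PI)
                       + cos (k * theta) ^ 2)).
Proof.
  intros Ha Hth Hk Hn Hg.
  set (c := cos (k*PI)). set (s := sin (k*PI)). set (x := cos (k*theta)).
  set (a := alpha / (4*k)).
  assert (Hs : s <> 0).
  { intro H0. destruct (sin_eq_0_0 _ H0) as [z Hz].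
    assert (HPI := PI_RGT_0).
    assert (Hkz : k = IZR z).
    { apply (Rmult_eq_reg_r PI); [exact Hz| lra]. }
    assert (Hz0 : (0 <= z)%Z).
    { apply le_IZR. lra. }
    apply (Hn (Z.to_nat z)). rewrite INR_IZR_INZ, Z2Nat.id; auto. }
  assert (Hcs : c^2 + s^2 = 1).
  { unfold c, s. rewrite <- (sin2_cos2 (k*PI)). unfold Rsqr. ring. }
  assert (Hx : x^2 <= 1).
  { unfold x. assert (H1 := COS_bound (k*theta)). nra. }
  set (g := gfun alpha k) in *.
  assert (Hgdef : g = c + a*s) by reflexivity.
  assert (Hg2 : 0 <= g^2 - 1).
  { destruct (Rle_dec 0 g).
    - rewrite Rabs_right in Hg by lra. nra.
    - rewrite Rabs_left in Hg by lra. nra. }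
  set (t := sgn_g alpha k * sqrt (g^2 - 1)).
  assert (Hsq := sqrt_sqrt _ Hg2).
  assert (Hsq0 := sqrt_pos (g^2 - 1)).
  assert (Ht : t^2 = (c + a*s)^2 - 1).
  { rewrite <- Hgdef. unfold t, sgn_g. fold g.
    destruct (Rle_dec 0 g); nra. }
  assert (Hgt : 0 <= (c + a*s) * t).
  { rewrite <- Hgdef. unfold t, sgn_g. fold g.
    destruct (Rle_dec 0 g); nra. }
  assert (Hf : ffun alpha k = - c + s^2 / (a*s + t)) by reflexivity.
  assert (Ha2 : alpha / (2*k) = 2*a) by (unfold a; field; lra).
  rewrite Hf, Ha2.
  split.
  - apply key; auto.
  - replace (2 * a * (1 - x * c) * (- x + c)) with (2*a*(1 + (-x)*c)*((-x) + c)) by ring.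
    replace (s * (1 - 2 * x * c + x ^ 2)) with (s * (1 + 2 * (-x) * c + (-x)^2)) by ring.
    apply key; auto. nra.
Qed.
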